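(* For every even $n\ge 6$ there exist Boolean bent functions $f,f'\colon\mathbb F_2^n\to\mathbb F_2$ that are not extended-affine equivalent but whose translation designs $\operatorname{dev}(G_f)$ and $\operatorname{dev}(G_{f'})$ are isomorphic. (Hence, for Boolean bent functions, isomorphism of the designs $\operatorname{dev}(G_f)$ is a strictly coarser equivalence relation than EA-equivalence for every even $n\ge6$.)
   Context: A Boolean function $f\colon\mathbb F_2^n\to\mathbb F_2$ ($n$ even) is bent if $\sum_{\mathbf x}(-1)^{f(\mathbf x)\oplus\langle\mathbf a,\mathbf x\rangle}=\pm2^{n/2}$ for all $\mathbf a\in\mathbb F_2^n$. Boolean functions $f,f'$ are EA-equivalent if $f=f'\circ A_2\oplus A_3$ for an affine permutation $A_2$ of $\mathbb F_2^n$ and an affine function $A_3\colon\mathbb F_2^n\to\mathbb F_2$. $G_f=\{(\mathbf x,f(\mathbf x))\}\subseteq\mathbb F_2^n\times\mathbb F_2$ is the graph of $f$; $\operatorname{dev}(A)$ denotes the incidence structure with point set the ambient group and blocks all translates $A+g$. Two incidence structures with incidence matrices $M,M'$ are isomorphic if $M=PM'Q$ for permutation matrices $P,Q$. *)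

(* Defs.v *)
From HB Require Import structures.
From mathcomp Require Import all_boot all_order all_fingroup all_algebra.
Set Implicit Arguments. Unset Strict Implicit. Unset Printing Implicit Defensive.
Import GRing.Theory.
Local Open Scope ring_scope.

Notation vecF2 n := 'rV['F_2]_n.

Definition dotF2 n (a x : vecF2 n) : 'F_2 := \sum_(i < n) a 0 i * x 0 i.

Definition sgnF2 (b : 'F_2) : int := if b == 0 then 1 else -1.

Definition walsh n (f : vecF2 n -> 'F_2) (a : vecF2 n) : int :=
  \sum_(x : vecF2 n) sgnF2 (f x + dotF2 a x).

Definition bent n (f : vecF2 n -> 'F_2) : Prop :=
  forall a : vecF2 n,
    walsh f a = (2 ^ n./2)%:Z \/ walsh f a = - (2 ^ n./2)%:Z.

Definition EA_equiv n (f f' : vecF2 n -> 'F_2) : Prop :=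
  exists (M : 'M['F_2]_n) (b c : vecF2 n) (d : 'F_2),
    M \in unitmx /\
    forall x : vecF2 n, f x = f' (x *m M + b) + (dotF2 c x + d).

Definition ambient n := (vecF2 n * 'F_2)%type.
Definition addA n (u v : ambient n) : ambient n := (u.1 + v.1, u.2 + v.2).
Definition graph n (f : vecF2 n -> 'F_2) : {set ambient n} :=
  [set (x, f x) | x : vecF2 n].

Definition translate n (A : {set ambient n}) (g : ambient n) : {set ambient n} :=
  [set addA u g | u in A].
Definition dev_blocks n (A : {set ambient n}) : {set {set ambient n}} :=
  [set translate A g | g : ambient n].

(* Isomorphism of the incidence structures dev(A), dev(B)
   (point set = ambient group, blocks = sets of points): a bijection of
   points mapping the block set of dev(A) onto the block set of dev(B).
   (For simple incidence structures this is equivalent to M = P M' Q.) *)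
Definition dev_isomorphic n (A B : {set ambient n}) : Prop :=
  exists s : {perm ambient n},
    [set [set s u | u in X] | X : {set ambient n} in dev_blocks A] = dev_blocks B.

(* Main.v *)
Require Import Defs.
From mathcomp Require Import all_boot all_order all_fingroup all_algebra.
From mathcomp Require Import zify ring.
Set Implicit Arguments. Unset Strict Implicit. Unset Printing Implicit Defensive.
Import GRing.Theory Num.Theory.
Local Open Scope ring_scope.

Lemma F2_cases (x : 'F_2) : x = 0 \/ x = 1.
Proof. case: x => [[|[|k]]] // H; [left|right]; exact: val_inj. Qed.

Ltac f2enum := repeat match goal with
  | |- context [?x : 'F_2] =>
      is_var x; let H := fresh in case: (F2_cases x) => H; rewrite H; clear H
  end.

Lemma vec_addKK n (v w : 'rV['F_2]_n) : v + w + w = v.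
Proof.
apply/rowP => i; rewrite !mxE.
case: (F2_cases (v 0 i)) => ->; case: (F2_cases (w 0 i)) => ->; by apply/eqP.
Qed.

Definition co n (z : 'rV['F_2]_n) (k : nat) : 'F_2 :=
  if insub k is Some i then z 0 i else 0.

Lemma coD n (z w : 'rV['F_2]_n) k : co (z + w) k = co z k + co w k.
Proof. rewrite /co; case: insub => [i|]; by rewrite ?mxE ?addr0. Qed.

Lemma co0 n k : co (0 : 'rV['F_2]_n) k = 0.
Proof. rewrite /co; case: insub => [i|]; by rewrite ?mxE. Qed.

Lemma co_ord n (z : 'rV['F_2]_n) (i : 'I_n) : co z i = z 0 i.
Proof. by rewrite /co valK. Qed.

Lemma co_out n (z : 'rV['F_2]_n) k : (n <= k)%N -> co z k = 0.
Proof. move=> h; rewrite /co insubN // -leqNgt //. Qed.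

Definition ev n k : 'rV['F_2]_n := \row_(i < n) ((i : nat) == k)%:R.

Lemma co_ev n k j : (j < n)%N -> co (ev n k) j = (j == k)%:R.
Proof. move=> hj; by rewrite /co insubT /= mxE. Qed.


Definition qf n (z : 'rV['F_2]_n) : 'F_2 :=
  \sum_(i < n./2) co z i * co z (i + n./2).
Definition Bf n (z w : 'rV['F_2]_n) : 'F_2 :=
  \sum_(i < n./2) (co z i * co w (i + n./2) + co w i * co z (i + n./2)).
Definition gf n (z : 'rV['F_2]_n) : 'F_2 :=
  co z n./2 * co z n./2.+1 * co z n./2.+2.
Definition ff n (z : 'rV['F_2]_n) : 'F_2 := qf z + gf z.
Definition Uf n (z : 'rV['F_2]_n) : 'rV['F_2]_n :=
  \row_(i < n) (if (i : nat) == 0%N then co z n./2.+1 * co z n./2.+2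
                else if (i : nat) == 1%N then co z n./2 * co z n./2.+2
                else if (i : nat) == 2%N then co z n./2 * co z n./2.+1 else 0).
Definition pif n (z : 'rV['F_2]_n) : 'rV['F_2]_n := z + Uf z.

Lemma q_add n (z w : 'rV['F_2]_n) : qf (z + w) = qf z + qf w + Bf z w.
Proof.
rewrite /qf /Bf -!big_split; apply: eq_bigr => i _; rewrite !coD /=; ring.
Qed.

Lemma Bf_addl n (z z' w : 'rV['F_2]_n) : Bf (z + z') w = Bf z w + Bf z' w.
Proof.
rewrite /Bf -!big_split; apply: eq_bigr => i _; rewrite !coD /=; ring.
Qed.

Lemma Bf_sym n (z w : 'rV['F_2]_n) : Bf z w = Bf w z.
Proof. rewrite /Bf; apply: eq_bigr => i _; ring. Qed.

Lemma Bf_addr n (z w w' : 'rV['F_2]_n) : Bf z (w + w') = Bf z w + Bf z w'.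
Proof. by rewrite Bf_sym Bf_addl !(Bf_sym z). Qed.


Lemma Bf_ev (n : nat) (hnm : n = (n./2 + n./2)%N) (hm : (3 <= n./2)%N) k (w : 'rV['F_2]_n) : (k < n./2)%N -> Bf (ev n k) w = co w (k + n./2).
Proof.
move=> hk; rewrite /Bf (bigD1 (Ordinal hk)) //= big1 ?addr0.
  rewrite !co_ev; try lia. rewrite eqxx.
  have -> : (k + n./2 == k)%N = false by apply/negbTE; lia.
  by rewrite mul1r mulr0 addr0.
move=> i /= hi; move: (ltn_ord i) => hi'; rewrite !co_ev; try lia.
have -> : ((i : nat) == k) = false by apply/negbTE; move: hi; apply: contra => /eqP h; apply/eqP/val_inj.
have -> : (i + n./2 == k)%N = false by apply/negbTE; lia.
by rewrite !mul0r mulr0 addr0.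
Qed.

Lemma Bf_ev2 (n : nat) (hnm : n = (n./2 + n./2)%N) (hm : (3 <= n./2)%N) k (w : 'rV['F_2]_n) : (k < n./2)%N -> Bf (ev n (k + n./2)) w = co w k.
Proof.
move=> hk; rewrite /Bf (bigD1 (Ordinal hk)) //= big1 ?addr0.
  rewrite !co_ev; try lia. rewrite eqxx.
  have -> : (k == k + n./2)%N = false by apply/negbTE; lia.
  by rewrite mul0r mulr1 add0r.
move=> i /= hi; move: (ltn_ord i) => hi'; rewrite !co_ev; try lia.
have -> : (i + n./2 == k + n./2)%N = false.
  by rewrite eqn_add2r; apply/negbTE; move: hi; apply: contra => /eqP h; apply/eqP/val_inj.
have -> : ((i : nat) == k + n./2)%N = false by apply/negbTE; lia.
by rewrite !mul0r mulr0 addr0.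
Qed.

Lemma co_U (n : nat) (hnm : n = (n./2 + n./2)%N) (hm : (3 <= n./2)%N) (z : 'rV['F_2]_n) j : (j < n)%N -> co (Uf z) j =
  (if j == 0%N then co z n./2.+1 * co z n./2.+2
   else if j == 1%N then co z n./2 * co z n./2.+2
   else if j == 2%N then co z n./2 * co z n./2.+1 else 0).
Proof. move=> hj; by rewrite /co insubT /= mxE. Qed.

Lemma co_U_hi (n : nat) (hnm : n = (n./2 + n./2)%N) (hm : (3 <= n./2)%N) (z : 'rV['F_2]_n) j : (3 <= j)%N -> co (Uf z) j = 0.
Proof.
move=> hj; case: (ltnP j n) => h; last by rewrite co_out.
rewrite (co_U hnm hm) //; case: j hj {h} => [|[|[|j]]] //.
Qed.

Lemma co_pi_hi (n : nat) (hnm : n = (n./2 + n./2)%N) (hm : (3 <= n./2)%N) (z : 'rV['F_2]_n) j : (3 <= j)%N -> co (pif z) j = co z j.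
Proof. by move=> hj; rewrite /pif coD (co_U_hi hnm hm) // addr0. Qed.

Lemma U_pi (n : nat) (hnm : n = (n./2 + n./2)%N) (hm : (3 <= n./2)%N) (z : 'rV['F_2]_n) : Uf (pif z) = Uf z.
Proof.
apply/rowP => i; rewrite !mxE !(co_pi_hi hnm hm) //; lia.
Qed.

Lemma pi_inv (n : nat) (hnm : n = (n./2 + n./2)%N) (hm : (3 <= n./2)%N) (z : 'rV['F_2]_n) : pif (pif z) = z.
Proof. by rewrite {1}/pif (U_pi hnm hm) /pif vec_addKK. Qed.

Lemma pi_inj (n : nat) (hnm : n = (n./2 + n./2)%N) (hm : (3 <= n./2)%N) : injective (@pif n).
Proof. by move=> x y h; rewrite -(pi_inv hnm hm x) h (pi_inv hnm hm). Qed.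

Definition Us (n : nat) (z w : 'rV['F_2]_n) : 'F_2 :=
  co z n./2.+1 * co z n./2.+2 * co w n./2 + co z n./2 * co z n./2.+2 * co w n./2.+1
  + co z n./2 * co z n./2.+1 * co w n./2.+2.

Lemma Bf_U (n : nat) (hnm : n = (n./2 + n./2)%N) (hm : (3 <= n./2)%N) (z w : 'rV['F_2]_n) : Bf (Uf z) w = Us z w.
Proof.
have h0 : (0 < n./2)%N by lia.
have h1 : (1 < n./2)%N by lia.
have h2 : (2 < n./2)%N by lia.
rewrite /Bf (bigD1 (Ordinal h0)) // (bigD1 (Ordinal h1)) // (bigD1 (Ordinal h2)) //=.
rewrite big1 ?addr0.
  rewrite !(co_U hnm hm); try lia.
  have e0 : (n./2 == 0%N) = false by apply/negbTE; lia.
  have e1 : (n./2 == 1%N) = false by apply/negbTE; lia.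
  have e2 : (n./2 == 2%N) = false by apply/negbTE; lia.
  have e3 : ((1 + n./2)%N == 1%N) = false by apply/negbTE; lia.
  have e4 : ((1 + n./2)%N == 2%N) = false by apply/negbTE; lia.
  have e5 : ((2 + n./2)%N == 2%N) = false by apply/negbTE; lia.
  rewrite e0 e1 e2 e3 e4 e5 /Us /= !add1n !add2n; ring.
move=> i /andP [/andP [hi0 hi1] hi2]; move: (ltn_ord i) => hi'.
rewrite (co_U hnm hm); last by lia.
have -> : ((i:nat) == 0%N) = false by apply/negbTE; move: hi0; apply: contra => /eqP h; apply/eqP/val_inj.
have -> : ((i:nat) == 1%N) = false by apply/negbTE; move: hi1; apply: contra => /eqP h; apply/eqP/val_inj.
have -> : ((i:nat) == 2%N) = false by apply/negbTE; move: hi2; apply: contra => /eqP h; apply/eqP/val_inj.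
rewrite (co_U_hi hnm hm); last by lia.
by rewrite mul0r mulr0 addr0.
Qed.

Lemma Us_U (n : nat) (hnm : n = (n./2 + n./2)%N) (hm : (3 <= n./2)%N) (z w : 'rV['F_2]_n) : Us z (Uf w) = 0.
Proof. rewrite /Us !(co_U_hi hnm hm w); try lia. by rewrite !mulr0 !addr0. Qed.

Lemma key (n : nat) (hnm : n = (n./2 + n./2)%N) (hm : (3 <= n./2)%N) (z a : 'rV['F_2]_n) : ff (z + a) = ff z + ff a + Bf (pif z) (pif a).
Proof.
rewrite /ff q_add /pif !Bf_addl !Bf_addr (Bf_sym z (Uf a)) !(Bf_U hnm hm) (Us_U hnm hm).
rewrite /gf /Us !coD; ring.
Qed.


Lemma sgn_add (b c : 'F_2) : sgnF2 (b + c) = sgnF2 b * sgnF2 c.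
Proof.
case: (F2_cases b) => ->; case: (F2_cases c) => ->; by rewrite /sgnF2 /=.
Qed.

Lemma sgn_add1 (b : 'F_2) : sgnF2 (b + 1) = - sgnF2 b.
Proof. case: (F2_cases b) => ->; by rewrite /sgnF2 /=. Qed.

Lemma sum_flip n (F : 'rV['F_2]_n -> 'F_2) e :
  (forall x, F (x + e) = F x + 1) -> \sum_x sgnF2 (F x) = 0.
Proof.
move=> hF.
set S := \sum_x _.
have hS : S = - S.
  rewrite /S {1}(reindex_inj (addIr e)) /= -sumrN; apply: eq_bigr => x _.
  by rewrite hF sgn_add1.
have : S *+ 2 = 0 by rewrite mulr2n {1}hS addNr.
by move/eqP; rewrite mulrn_eq0 /= => /eqP.
Qed.

Lemma dotD n (a x y : 'rV['F_2]_n) : dotF2 a (x + y) = dotF2 a x + dotF2 a y.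
Proof. rewrite /dotF2 -big_split; apply: eq_bigr => i _; by rewrite mxE mulrDr. Qed.

Lemma dot0 n (a : 'rV['F_2]_n) : dotF2 a 0 = 0.
Proof. rewrite /dotF2 big1 // => i _; by rewrite mxE mulr0. Qed.

Lemma card_vec n : #|{: 'rV['F_2]_n}| = (2 ^ n)%N.
Proof. by rewrite card_mx card_Fp // mul1n. Qed.

Lemma walsh_sq n (F : 'rV['F_2]_n -> 'F_2) a :
  (forall u, u != 0 -> \sum_x sgnF2 (F x + F (x + u)) = 0) ->
  walsh F a ^+ 2 = (2 ^ n)%N%:Z.
Proof.
move=> hAC.
rewrite expr2 /walsh big_distrlr /=.
transitivity (\sum_(u : 'rV['F_2]_n) sgnF2 (dotF2 a u) * \sum_x sgnF2 (F x + F (x + u))).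
  rewrite (eq_bigr (fun x => \sum_u sgnF2 (dotF2 a u) * sgnF2 (F x + F (x + u)))).
    rewrite exchange_big /=; apply: eq_bigr => u _; by rewrite big_distrr.
  move=> x _; rewrite (reindex_inj (addrI x)) /=; apply: eq_bigr => u _.
  rewrite -!sgn_add dotD; congr sgnF2.
  move: (F x) (F (x + u)) (dotF2 a x) (dotF2 a u) => p q r s.
  case: (F2_cases p) => ->; case: (F2_cases q) => ->; case: (F2_cases r) => ->;
  case: (F2_cases s) => ->; by apply/eqP.
rewrite (bigD1 0) //= [X in _ + X]big1 ?addr0.
  rewrite dot0 /sgnF2 eqxx mul1r.
  rewrite (eq_bigr (fun _ => 1)); last first.
    move=> x _; have -> : x + 0 = x by apply/rowP=> i; rewrite !mxE addr0.
    by case: (F2_cases (F x)) => ->.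
  rewrite sumr_const card_vec.
  by rewrite -[(1 *+ _)]/((2 ^ n)%N%:R) natz.
move=> u hu; by rewrite hAC // mulr0.
Qed.

Lemma bent_of_sq n (F : 'rV['F_2]_n -> 'F_2) (hnm : n = (n./2 + n./2)%N) :
  (forall u, u != 0 -> \sum_x sgnF2 (F x + F (x + u)) = 0) -> bent F.
Proof.
move=> hAC a; have := walsh_sq a hAC.
have -> : (2 ^ n)%N%:Z = (2 ^ n./2)%N%:Z ^+ 2.
  by rewrite expr2 -PoszM -expnD -hnm.
move/eqP; rewrite eqf_sqr => /orP [/eqP -> | /eqP ->]; by [left | right].
Qed.

Lemma nz_coord n (u : 'rV['F_2]_n) : u != 0 -> exists i : 'I_n, u 0 i = 1.
Proof.
move=> hu; case: (pickP (fun i => u 0 i == 1)) => [i /eqP hi | h]; first by exists i.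
case/eqP: hu; apply/rowP => i; rewrite !mxE; case: (F2_cases (u 0 i)) => // h1.
by move: (h i); rewrite h1 eqxx.
Qed.

Lemma co_ev_ne n k j : j != k -> co (ev n k) j = 0.
Proof.
move=> hjk; case: (ltnP j n) => h; last by rewrite co_out.
by rewrite co_ev // (negbTE hjk).
Qed.

Lemma bent_gen n (hnm : n = (n./2 + n./2)%N) (hm : (3 <= n./2)%N)
  (F G : 'rV['F_2]_n -> 'F_2) (HF : forall z, F z = qf z + G z)
  (HG : forall z w, (forall j, (n./2 <= j)%N -> co z j = co w j) -> G z = G w) :
  bent F.
Proof.
apply: (bent_of_sq hnm) => u hu.
case: (pickP (fun k : 'I_n./2 => co u (k + n./2) == 1)) => [k /eqP hk | hnone].
  apply: (sum_flip (e := ev n k)) => x.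
  have hk' := ltn_ord k.
  have hG1 : G (x + ev n k) = G x.
    apply: HG => j hj; rewrite coD co_ev_ne ?addr0 //; apply/eqP; lia.
  have hG2 : G (x + ev n k + u) = G (x + u).
    apply: HG => j hj; rewrite !coD co_ev_ne ?addr0 //; apply/eqP; lia.
  rewrite !HF hG1 hG2 !q_add !Bf_addl (Bf_ev hnm hm) // hk.
  move: (qf x) (qf (ev n k)) (Bf x (ev n k)) (qf u) (Bf x u) (G x) (G (x + u)).
  move=> p1 p2 p3 p4 p5 p6 p7.
  case: (F2_cases p1) => ->; case: (F2_cases p2) => ->; case: (F2_cases p3) => ->;
  case: (F2_cases p4) => ->; case: (F2_cases p5) => ->; case: (F2_cases p6) => ->;
  case: (F2_cases p7) => ->; by apply/eqP.
have [i hi] := nz_coord hu.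
have him : (i < n./2)%N.
  rewrite ltnNge; apply/negP => hge.
  have hlt : (i - n./2 < n./2)%N by move: (ltn_ord i); lia.
  move: (hnone (Ordinal hlt)) => /=.
  have -> : (i - n./2 + n./2)%N = i by lia.
  by rewrite co_ord hi eqxx.
have hu0 : forall j, (n./2 <= j)%N -> co u j = 0.
  move=> j hj; case: (ltnP j n) => hjn; last by rewrite co_out.
  have hlt : (j - n./2 < n./2)%N by lia.
  move: (hnone (Ordinal hlt)) => /=.
  have -> : (j - n./2 + n./2)%N = j by lia.
  by case: (F2_cases (co u j)) => -> //; rewrite eqxx.
have hGu : forall y, G (y + u) = G y.
  move=> y; apply: HG => j hj; by rewrite coD hu0 // addr0.
apply: (@sum_flip n _ (ev n (i + n./2)%N)) => x.
rewrite !HF !hGu !q_add !Bf_addl (Bf_ev2 hnm hm) // co_ord hi.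
move: (qf x) (qf (ev n (i + n./2)%N)) (Bf x (ev n (i + n./2)%N)) (qf u) (Bf x u) (G x) (G (x + ev n (i + n./2)%N)).
move=> p1 p2 p3 p4 p5 p6 p7.
case: (F2_cases p1) => ->; case: (F2_cases p2) => ->; case: (F2_cases p3) => ->;
case: (F2_cases p4) => ->; case: (F2_cases p5) => ->; case: (F2_cases p6) => ->;
case: (F2_cases p7) => ->; by apply/eqP.
Qed.

Definition Dd n (a : 'rV['F_2]_n) (F : 'rV['F_2]_n -> 'F_2) x := F (x + a) + F x.
Definition T3 n (F : 'rV['F_2]_n -> 'F_2) x a b c := Dd c (Dd b (Dd a F)) x.

Lemma Dd_ext n (a : 'rV['F_2]_n) G H : (forall y, G y = H y) -> forall x, Dd a G x = Dd a H x.
Proof. by move=> h x; rewrite /Dd !h. Qed.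

Lemma T3_ext n (G H : 'rV['F_2]_n -> 'F_2) x a b c :
  (forall y, G y = H y) -> T3 G x a b c = T3 H x a b c.
Proof.
move=> h; rewrite /T3; apply: Dd_ext => y; apply: Dd_ext => y'; exact: Dd_ext.
Qed.

Lemma T3_add n (G H : 'rV['F_2]_n -> 'F_2) x a b c :
  T3 (fun y => G y + H y) x a b c = T3 G x a b c + T3 H x a b c.
Proof. rewrite /T3 /Dd; ring. Qed.

Lemma T3_comp n (G : 'rV['F_2]_n -> 'F_2) (M : 'M['F_2]_n) (b0 : 'rV['F_2]_n) x a b c :
  T3 (fun y => G (y *m M + b0)) x a b c =
  T3 G (x *m M + b0) (a *m M) (b *m M) (c *m M).
Proof.
have H : forall y v, (y + v) *m M + b0 = (y *m M + b0) + v *m M.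
  by move=> y v; rewrite mulmxDl addrAC.
by rewrite /T3 /Dd !H.
Qed.

Lemma T3_aff n (c0 : 'rV['F_2]_n) d x a b c :
  T3 (fun y => dotF2 c0 y + d) x a b c = 0.
Proof.
rewrite /T3 /Dd !dotD.
move: (dotF2 c0 x) (dotF2 c0 a) (dotF2 c0 b) (dotF2 c0 c) d => p1 p2 p3 p4 p5.
case: (F2_cases p1) => ->; case: (F2_cases p2) => ->; case: (F2_cases p3) => ->;
case: (F2_cases p4) => ->; case: (F2_cases p5) => ->; by apply/eqP.
Qed.

Lemma T3_q n (x a b c : 'rV['F_2]_n) : T3 (@qf n) x a b c = 0.
Proof.
have h1 : forall y, Dd a (@qf n) y = qf a + Bf y a.
  move=> y; rewrite /Dd q_add.
  move: (qf y) (qf a) (Bf y a) => p1 p2 p3.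
  case: (F2_cases p1) => ->; case: (F2_cases p2) => ->; case: (F2_cases p3) => ->; by apply/eqP.
have h2 : forall y, Dd b (Dd a (@qf n)) y = Bf b a.
  move=> y; rewrite [Dd b _ _]/Dd !h1 Bf_addl.
  move: (qf a) (Bf y a) (Bf b a) => p1 p2 p3.
  case: (F2_cases p1) => ->; case: (F2_cases p2) => ->; case: (F2_cases p3) => ->; by apply/eqP.
rewrite /T3 [Dd c _ _]/Dd !h2.
case: (F2_cases (Bf b a)) => ->; by apply/eqP.
Qed.

Lemma T3_g n (hnm : n = (n./2 + n./2)%N) (hm : (3 <= n./2)%N) :
  T3 (@gf n) 0 (ev n n./2) (ev n n./2.+1) (ev n n./2.+2) = 1.
Proof.
have l0 : (n./2 < n)%N by lia.
have l1 : (n./2.+1 < n)%N by lia.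
have l2 : (n./2.+2 < n)%N by lia.
have f1 : (n./2.+1 == n./2) = false by apply/negbTE; lia.
have f2 : (n./2.+2 == n./2) = false by apply/negbTE; lia.
have f3 : (n./2 == n./2.+1) = false by apply/negbTE; lia.
have f4 : (n./2.+2 == n./2.+1) = false by apply/negbTE; lia.
have f5 : (n./2 == n./2.+2) = false by apply/negbTE; lia.
have f6 : (n./2.+1 == n./2.+2) = false by apply/negbTE; lia.
rewrite /T3 /Dd /gf !coD !co0 !co_ev // !eqxx f1 f2 f3 f4 f5 f6.
by apply/eqP.
Qed.

Lemma notEA n (hnm : n = (n./2 + n./2)%N) (hm : (3 <= n./2)%N) :
  ~ EA_equiv (@ff n) (@qf n).
Proof.
move=> [M [b0 [c [d [_ Hf]]]]].
set e0 := ev n n./2; set e1 := ev n n./2.+1; set e2 := ev n n./2.+2.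
have A : T3 (@ff n) 0 e0 e1 e2 = 0.
  rewrite (T3_ext _ _ _ _ Hf) (T3_add (fun y => qf (y *m M + b0))).
  by rewrite T3_comp T3_q T3_aff addr0.
have B : T3 (@ff n) 0 e0 e1 e2 = 1.
  rewrite (T3_ext (H := fun y => qf y + gf y)) // T3_add T3_q add0r.
  exact: T3_g.
by move: A; rewrite B => /eqP; rewrite oner_eq0.
Qed.

Definition sfun n (p : ambient n) : ambient n :=
  (pif p.1, p.2 + qf (pif p.1) + ff p.1).
Definition phi n (g : ambient n) : ambient n :=
  (pif g.1, qf (pif g.1) + ff g.1 + g.2).

Lemma sfun_inj n (hnm : n = (n./2 + n./2)%N) (hm : (3 <= n./2)%N) : injective (@sfun n).
Proof.
move=> [x t] [y t'] h.
have h1 : pif x = pif y := congr1 fst h.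
have h2 : t + qf (pif x) + ff x = t' + qf (pif y) + ff y := congr1 snd h.
have e := pi_inj hnm hm h1; subst y.
by congr pair; apply: (addIr (qf (pif x))); apply: (addIr (ff x)).
Qed.

Lemma phi_inj n (hnm : n = (n./2 + n./2)%N) (hm : (3 <= n./2)%N) : injective (@phi n).
Proof.
move=> [x t] [y t'] h.
have h1 : pif x = pif y := congr1 fst h.
have h2 : qf (pif x) + ff x + t = qf (pif y) + ff y + t' := congr1 snd h.
have e := pi_inj hnm hm h1; subst y.
by congr pair; apply: (addrI (qf (pif x) + ff x)).
Qed.

Lemma img_inj (T U : finType) (G : T -> U) (rho : T -> T) :
  injective rho -> [set G (rho x) | x : T] = [set G x | x : T].
Proof.
move=> hr; apply/setP => y; apply/imsetP/imsetP => [[x _ ->]|[x _ ->]].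
  by exists (rho x).
by exists (invF hr x) => //; rewrite f_invF.
Qed.

Lemma blk n (hnm : n = (n./2 + n./2)%N) (hm : (3 <= n./2)%N) (g : ambient n) :
  [set sfun u | u in translate (graph (@ff n)) g] = translate (graph (@qf n)) (phi g).
Proof.
case: g => a b.
rewrite /translate /graph -!imset_comp.
have hr : injective (fun x => pif (x + a) + pif a).
  move=> x y /addIr /(pi_inj hnm hm) /addIr; done.
rewrite -[in RHS](img_inj _ hr); apply: eq_imset => x.
have E1 : pif (x + a) = pif (x + a) + pif a + pif a by rewrite vec_addKK.
have K := key hnm hm (x + a) a; rewrite vec_addKK in K.
have E2 : ff x + b + qf (pif (x + a)) + ff (x + a) =
          qf (pif (x + a) + pif a) + (qf (pif a) + ff a + b).
  rewrite K q_add.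
  move: (ff (x + a)) (ff a) (Bf (pif (x + a)) (pif a)) b (qf (pif (x + a))) (qf (pif a)).
  move=> p1 p2 p3 p4 p5 p6.
  case: (F2_cases p1) => ->; case: (F2_cases p2) => ->; case: (F2_cases p3) => ->;
  case: (F2_cases p4) => ->; case: (F2_cases p5) => ->; case: (F2_cases p6) => ->;
  by apply/eqP.
exact: (f_equal2 pair E1 E2).
Qed.

Local Close Scope ring_scope.

Theorem theorem2 (n : nat) (hn : 6 <= n) (heven : ~~ odd n) :
  exists f f' : 'rV['F_2]_n -> 'F_2,
    [/\ bent f, bent f', ~ EA_equiv f f' &
        dev_isomorphic (graph f) (graph f')].
Proof.
have hnm : n = (n./2 + n./2)%N.
  have := odd_double_half n; rewrite (negbTE heven) add0n -addnn => h.
  by rewrite {1}h.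
have hm : (3 <= n./2)%N by lia.
exists (@ff n), (@qf n); split.
- apply: (bent_gen hnm hm (G := @gf n)) => // z w h.
  rewrite /gf !h //; lia.
- apply: (bent_gen hnm hm (G := fun _ => 0%R)) => // z; by rewrite addr0.
- exact: notEA.
- exists (perm (sfun_inj hnm hm)).
  rewrite /dev_blocks -imset_comp.
  rewrite (eq_imset (g := fun g => translate (graph (@qf n)) (phi g))); last first.
    move=> g /=; rewrite -blk //; apply: eq_imset => u; by rewrite permE.
  exact: (img_inj (fun g => translate (graph (@qf n)) g) (phi_inj hnm hm)).
Qed.
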